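(* Let $a_1,a_2,a_3,a_4,a_5$ be rational numbers with $1\geqslant a_1\geqslant a_2\geqslant a_3\geqslant a_4\geqslant a_5\geqslant 0$, and let $\delta\geqslant 0$ be rational. Let $N$ be the largest number among $a_2,\ a_2+a_3,\ a_2+a_4,\ a_2+a_5,\ a_3+a_4,\ a_3+a_5,\ a_4+a_5,\ a_2+a_3+a_4,\ a_2+a_3+a_5,\ a_2+a_4+a_5,\ a_3+a_4+a_5,\ a_2+a_3+a_4+a_5$ that does not exceed $1$. Define $$\alpha=\begin{cases}\frac{2}{3+2a_1+2\delta+a_2+a_3+a_4} & \text{if } a_2+a_3\leqslant 1+a_4,\\ \frac{2}{3+2a_1+2\delta+a_2+a_4} & \text{if } a_2+a_4\leqslant 1 \text{ and } a_2+a_3>1+a_4,\\ \frac{2}{3+2a_1+2\delta+a_3+a_4} & \text{if } a_3+a_4\leqslant 1,\ a_2+a_4>1 \text{ and } a_2+a_3>1+a_4,\\ \frac{2}{3+2a_1+2\delta+a_2} & \text{if } a_3+a_4>1,\ a_2+a_4>1 \text{ and } a_2+a_3>1+a_4.\end{cases}$$ Then $$\frac{2}{3+2a_1+2\delta+N}\leqslant\frac{2}{3}\cdot\frac{4+2\delta+a_1+a_2+a_3+a_4+a_5}{4+4\delta+2(a_1+a_2+a_3+a_4+a_5)-a_1^2-a_2^2-a_3^2-a_4^2-a_5^2}$$ and $$\alpha\leqslant\frac{8+4\delta+2a_1+2a_2+2a_3+2a_4}{12+12\delta+6a_1+6a_2+6a_3+6a_4-3a_1^2-3a_2^2-3a_3^2-3a_4^2}.$$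 Moreover, both inequalities are strict unless $a_1=\delta=0$.
   Context: Here $\alpha$ is merely the number defined in the statement (not an $\alpha$-invariant). *)

(* Defs.v *)
From mathcomp Require Import all_boot all_order all_algebra.
Set Implicit Arguments. Unset Strict Implicit. Unset Printing Implicit Defensive.
Import Order.TTheory GRing.Theory Num.Theory.
Local Open Scope ring_scope.

Definition candidates (a2 a3 a4 a5 : rat) : seq rat :=
  [:: a2; a2 + a3; a2 + a4; a2 + a5; a3 + a4; a3 + a5; a4 + a5;
      a2 + a3 + a4; a2 + a3 + a5; a2 + a4 + a5; a3 + a4 + a5;
      a2 + a3 + a4 + a5].

Definition is_largest_le1 (s : seq rat) (N : rat) : Prop :=
  N \in s /\ N <= 1 /\ (forall x, x \in s -> x <= 1 -> x <= N).

Definition alpha (a1 a2 a3 a4 delta : rat) : rat :=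
  if a2 + a3 <= 1 + a4 then 2 / (3 + 2 * a1 + 2 * delta + a2 + a3 + a4)
  else if a2 + a4 <= 1 then 2 / (3 + 2 * a1 + 2 * delta + a2 + a4)
  else if a3 + a4 <= 1 then 2 / (3 + 2 * a1 + 2 * delta + a3 + a4)
  else 2 / (3 + 2 * a1 + 2 * delta + a2).

Definition lhs1 (a1 delta N : rat) : rat := 2 / (3 + 2 * a1 + 2 * delta + N).

Definition rhs1 (a1 a2 a3 a4 a5 delta : rat) : rat :=
  (2 / 3) * ((4 + 2 * delta + a1 + a2 + a3 + a4 + a5) /
   (4 + 4 * delta + 2 * (a1 + a2 + a3 + a4 + a5)
      - a1 ^+ 2 - a2 ^+ 2 - a3 ^+ 2 - a4 ^+ 2 - a5 ^+ 2)).

Definition rhs2 (a1 a2 a3 a4 delta : rat) : rat :=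
  (8 + 4 * delta + 2 * a1 + 2 * a2 + 2 * a3 + 2 * a4) /
  (12 + 12 * delta + 6 * a1 + 6 * a2 + 6 * a3 + 6 * a4
     - 3 * a1 ^+ 2 - 3 * a2 ^+ 2 - 3 * a3 ^+ 2 - 3 * a4 ^+ 2).

(* Main.v *)
Require Import Defs.
From mathcomp Require Import all_boot all_order all_algebra.
From mathcomp Require Import ring lra.
Import Order.TTheory GRing.Theory Num.Theory.
Local Open Scope ring_scope.

Lemma caseA (a1 a2 a3 a4 a5 d : rat) :
  a1 <= 1 -> a2 <= a1 -> a3 <= a2 -> a4 <= a3 -> a5 <= a4 -> 0 <= a5 -> 0 <= d ->
  a2 + a3 + a4 + a5 <= 1 ->
  a1 + 2*d <= (2*a1+2*d+(a2+a3+a4+a5))*(4+2*d+(a1+a2+a3+a4+a5)) - 6*d - 3*(a1+a2+a3+a4+a5)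
   + 3*(a1^+2+a2^+2+a3^+2+a4^+2+a5^+2).
Proof. move=> *. nra. Qed.

Lemma caseB (a1 a2 a3 a4 a5 d : rat) :
  a1 <= 1 -> a2 <= a1 -> a3 <= a2 -> a4 <= a3 -> a5 <= a4 -> 0 <= a5 -> 0 <= d ->
  1 < a2 + a3 + a4 + a5 ->
  a1 + 2*d <= (2*a1+2*d+a2)*(4+2*d+(a1+a2+a3+a4+a5)) - 6*d - 3*(a1+a2+a3+a4+a5)
   + 3*(a1^+2+a2^+2+a3^+2+a4^+2+a5^+2).
Proof. move=> *. nra. Qed.
Definition F4 (a1 a2 a3 a4 d x : rat) :=
  (2*a1+2*d+x)*(4+2*d+(a1+a2+a3+a4)) - 6*d - 3*(a1+a2+a3+a4)
   + 3*(a1^+2+a2^+2+a3^+2+a4^+2).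

Lemma c1 (a1 a2 a3 a4 d : rat) :
  a1 <= 1 -> a2 <= a1 -> a3 <= a2 -> a4 <= a3 -> 0 <= a4 -> 0 <= d ->
  a1 + 2*d <= F4 a1 a2 a3 a4 d (a2+a3+a4).
Proof. rewrite /F4 => *. nra. Qed.
Lemma c2 (a1 a2 a3 a4 d : rat) :
  a1 <= 1 -> a2 <= a1 -> a3 <= a2 -> a4 <= a3 -> 0 <= a4 -> 0 <= d ->
  1 + a4 < a2 + a3 -> 
  a1 + 2*d <= F4 a1 a2 a3 a4 d (a2+a4).
Proof. rewrite /F4 => *. nra. Qed.
Lemma c3 (a1 a2 a3 a4 d : rat) :
  a1 <= 1 -> a2 <= a1 -> a3 <= a2 -> a4 <= a3 -> 0 <= a4 -> 0 <= d ->
  1 + a4 < a2 + a3 -> 1 < a2 + a4 ->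
  a1 + 2*d <= F4 a1 a2 a3 a4 d (a3+a4).
Proof. rewrite /F4 => *. nra. Qed.
Lemma c4 (a1 a2 a3 a4 d : rat) :
  a1 <= 1 -> a2 <= a1 -> a3 <= a2 -> a4 <= a3 -> 0 <= a4 -> 0 <= d ->
  1 + a4 < a2 + a3 -> 1 < a2 + a4 -> 1 < a3 + a4 ->
  a1 + 2*d <= F4 a1 a2 a3 a4 d a2.
Proof. rewrite /F4 => *. nra. Qed.

Lemma sq01 (a : rat) : 0 <= a -> a <= 1 -> 0 <= 2*a - a^+2.
Proof. move=> *; nra. Qed.

Lemma cmp (A B D e : rat) : 0 < A -> 0 < D -> e <= A*B - 3*D -> 0 <= e ->
  (2/A <= 2/3*(B/D)) /\ (0 < e -> 2/A < 2/3*(B/D)).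
Proof.
move=> hA hD he he0.
have E : 2/3*(B/D) - 2/A = 2*(A*B-3*D)/(3*A*D).
  by field; rewrite !gt_eqF.
have h3 : 0 < 3*A*D by rewrite !mulr_gt0.
split.
  by rewrite -subr_ge0 E divr_ge0 ?(ltW h3) //; lra.
by move=> he1; rewrite -subr_gt0 E divr_gt0 //; lra.
Qed.

Lemma I1lem (a1 a2 a3 a4 a5 delta N : rat) :
  a1 <= 1 -> a2 <= a1 -> a3 <= a2 -> a4 <= a3 -> a5 <= a4 -> 0 <= a5 ->
  0 <= delta -> a2 <= N -> (a2 + a3 + a4 + a5 <= 1 -> a2 + a3 + a4 + a5 <= N) ->
  (lhs1 a1 delta N <= rhs1 a1 a2 a3 a4 a5 delta) /\
   (0 < a1 + 2*delta -> lhs1 a1 delta N < rhs1 a1 a2 a3 a4 a5 delta).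
Proof.
move=> h1 h2 h3 h4 h5 h6 hd hN2 HT.
have q1 : 0 <= 2*a1 - a1^+2 by apply: sq01; lra.
have q2 : 0 <= 2*a2 - a2^+2 by apply: sq01; lra.
have q3 : 0 <= 2*a3 - a3^+2 by apply: sq01; lra.
have q4 : 0 <= 2*a4 - a4^+2 by apply: sq01; lra.
have q5 : 0 <= 2*a5 - a5^+2 by apply: sq01; lra.
have He0 : 0 <= a1 + 2*delta by lra.
rewrite /rhs1 /lhs1; apply: cmp; [lra | lra | | exact: He0].
case: (lerP (a2 + a3 + a4 + a5) 1) => hT.
  have hNT := HT hT.
  have := @caseA _ _ _ _ _ _ h1 h2 h3 h4 h5 h6 hd hT.
  have : 0 <= (N - (a2+a3+a4+a5)) * (4+2*delta+(a1+a2+a3+a4+a5)).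
    by apply: mulr_ge0; lra.
  clear HT; lra.
have := @caseB _ _ _ _ _ _ h1 h2 h3 h4 h5 h6 hd hT.
have : 0 <= (N - a2) * (4+2*delta+(a1+a2+a3+a4+a5)).
  by apply: mulr_ge0; lra.
clear HT; lra.
Qed.

Lemma I2lem (a1 a2 a3 a4 delta : rat) :
  a1 <= 1 -> a2 <= a1 -> a3 <= a2 -> a4 <= a3 -> 0 <= a4 ->
  0 <= delta ->
  (alpha a1 a2 a3 a4 delta <= rhs2 a1 a2 a3 a4 delta) /\
   (0 < a1 + 2*delta -> alpha a1 a2 a3 a4 delta < rhs2 a1 a2 a3 a4 delta).
Proof.
move=> h1 h2 h3 h4 h40 hd.
have q1 : 0 <= 2*a1 - a1^+2 by apply: sq01; lra.
have q2 : 0 <= 2*a2 - a2^+2 by apply: sq01; lra.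
have q3 : 0 <= 2*a3 - a3^+2 by apply: sq01; lra.
have q4 : 0 <= 2*a4 - a4^+2 by apply: sq01; lra.
have He0 : 0 <= a1 + 2*delta by lra.
have hD : 0 < 4+4*delta+2*(a1+a2+a3+a4) - (a1^+2+a2^+2+a3^+2+a4^+2) by lra.
have R2 : rhs2 a1 a2 a3 a4 delta = 2/3 * ((4+2*delta+(a1+a2+a3+a4)) /
   (4+4*delta+2*(a1+a2+a3+a4) - (a1^+2+a2^+2+a3^+2+a4^+2))).
  by rewrite mulf_div /rhs2; congr (_ / _); ring.
rewrite R2 /alpha; clear R2.
case: ifPn => [_|c1'].
  apply: cmp => //; [lra|].
  have := @c1 _ _ _ _ _ h1 h2 h3 h4 h40 hd; rewrite /F4; lra.
have c1n : 1 + a4 < a2 + a3 by rewrite ltNge.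
case: ifPn => [_|c2'].
  apply: cmp => //; [lra|].
  have := @c2 _ _ _ _ _ h1 h2 h3 h4 h40 hd c1n; rewrite /F4; lra.
have c2n : 1 < a2 + a4 by rewrite ltNge.
case: ifPn => [_|c3'].
  apply: cmp => //; [lra|].
  have := @c3 _ _ _ _ _ h1 h2 h3 h4 h40 hd c1n c2n; rewrite /F4; lra.
have c3n : 1 < a3 + a4 by rewrite ltNge.
apply: cmp => //; [lra|].
have := @c4 _ _ _ _ _ h1 h2 h3 h4 h40 hd c1n c2n c3n; rewrite /F4; lra.
Qed.

Theorem propositionA1 (a1 a2 a3 a4 a5 delta N : rat) :
  a1 <= 1 -> a2 <= a1 -> a3 <= a2 -> a4 <= a3 -> a5 <= a4 -> 0 <= a5 ->
  0 <= delta ->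
  is_largest_le1 (candidates a2 a3 a4 a5) N ->
  (lhs1 a1 delta N <= rhs1 a1 a2 a3 a4 a5 delta /\
   alpha a1 a2 a3 a4 delta <= rhs2 a1 a2 a3 a4 delta) /\
  (~ (a1 = 0 /\ delta = 0) ->
     lhs1 a1 delta N < rhs1 a1 a2 a3 a4 a5 delta /\
     alpha a1 a2 a3 a4 delta < rhs2 a1 a2 a3 a4 delta).
Proof.
move=> h1 h2 h3 h4 h5 h6 hd [Nin [N1 Nmax]].
have hN2 : a2 <= N by apply: Nmax; [by rewrite /candidates inE eqxx | lra].
have HT : a2 + a3 + a4 + a5 <= 1 -> a2 + a3 + a4 + a5 <= N.
  by apply: Nmax; rewrite /candidates !inE eqxx !orbT.
have h40 : 0 <= a4 by lra.
have [I1a I1b] := @I1lem _ _ _ _ _ _ _ h1 h2 h3 h4 h5 h6 hd hN2 HT.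
have [I2a I2b] := @I2lem _ _ _ _ _ h1 h2 h3 h4 h40 hd.
split; first by split.
move=> H.
have He : 0 < a1 + 2*delta.
  rewrite ltNge; apply/negP=> He; apply: H.
  clear -He h1 h2 h3 h4 h5 h6 hd; split; lra.
by split; [apply: I1b | apply: I2b].
Qed.
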